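(* In type $A_r$, let $\theta$ be the highest root and, for $1 \le m \le r$, let $C_m = s_m s_{m+1} \cdots s_r\, s_{m-1} s_{m-2} \cdots s_1$ (so $C_1 = s_1 s_2\cdots s_r$ and $C_r = s_r s_{r-1}\cdots s_1$). Then $C_m(\theta) = -\alpha_m$ for each $m$, and for any Coxeter element $c$ of $W(A_r)$ (a product of all simple reflections, each exactly once, in some order), $c(\theta) > 0$ if and only if $c \notin \{C_1, \dots, C_r\}$.
   Context: Type $A_r$ is realized in $\mathbb{R}^{r+1}$ with orthonormal basis $e_1,\dots,e_{r+1}$, positive roots $e_i - e_j$ ($i<j$), simple roots $\alpha_i = e_i - e_{i+1}$, and $s_i$ swapping $e_i$ and $e_{i+1}$; the highest root is $\theta = e_1 - e_{r+1}$. Products of reflections act by composition (rightmost factor applied first). $\gamma>0$ means $\gamma$ is a positive root. *)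

(* Defs.v *)
(* Type A_r realized in R^{r+1} (row vectors 'rV[R]_(r.+1)),
   R any real field; coordinates are 0-based: e_k for k : 'I_(r.+1),
   simple roots alpha_i for i : 'I_r (paper's alpha_{i+1}). *)
From mathcomp Require Import all_boot all_order all_algebra all_fingroup.
Set Implicit Arguments. Unset Strict Implicit. Unset Printing Implicit Defensive.
Import Order.TTheory GRing.Theory Num.Theory.
Local Open Scope ring_scope.

Section TypeA.
Variables (R : realFieldType) (r : nat).

Definition vec := 'rV[R]_(r.+1).

Definition e (k : 'I_(r.+1)) : vec := \row_j (j == k)%:R.

Definition lo (i : 'I_r) : 'I_(r.+1) := widen_ord (leqnSn r) i.
Definition hi (i : 'I_r) : 'I_(r.+1) := lift ord0 i.

Definition alpha (i : 'I_r) : vec := e (lo i) - e (hi i).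

Definition theta : vec := e ord0 - e ord_max.

Definition pos_root (v : vec) : Prop :=
  exists i j : 'I_(r.+1), (i < j)%N /\ v = e i - e j.

Definition s (i : 'I_r) (v : vec) : vec :=
  \row_k v 0 (tperm (lo i) (hi i) k).

(* product s_{w_1} s_{w_2} ... s_{w_n} acting by composition
   (rightmost factor applied first) *)
Definition wprod (w : seq 'I_r) : vec -> vec :=
  foldr (fun i f => s i \o f) id w.

(* C_m = s_m s_{m+1} ... s_r s_{m-1} ... s_1, 0-based index m *)
Definition Cword (m : 'I_r) : seq 'I_r :=
  [seq i : 'I_r <- enum 'I_r | (m <= i)%N] ++ rev [seq i : 'I_r <- enum 'I_r | (i < m)%N].

Definition C (m : 'I_r) : vec -> vec := wprod (Cword m).

End TypeA.

Arguments e : clear implicits.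
Arguments alpha : clear implicits.
Arguments theta : clear implicits.
Arguments pos_root : clear implicits.
Arguments s : clear implicits.
Arguments wprod : clear implicits.
Arguments C : clear implicits.

(* Main.v *)
Require Import Defs.
From mathcomp Require Import all_boot all_order all_algebra all_fingroup.
From mathcomp Require Import zify lra.
From Stdlib Require Import FunctionalExtensionality.
Import GRing.Theory Num.Theory.
Local Open Scope ring_scope.

Definition sw (i x : nat) : nat :=
  if x == i then i.+1 else if x == i.+1 then i else x.
Definition tn (u : seq nat) (x : nat) : nat := foldr sw x u.

Lemma tn_cat u v x : tn (u ++ v) x = tn u (tn v x).
Proof. by rewrite /tn foldr_cat. Qed.

Lemma tn_fix u x : (forall i, i \in u -> (i != x) && (i.+1 != x)) -> tn u x = x.
Proof.
elim: u => [|i u IH] H //=.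
rewrite IH; last by move=> k hk; apply: H; rewrite in_cons hk orbT.
have /andP[h1 h2] := H i (mem_head _ _).
rewrite /sw; case: eqP => [e|_]; first by rewrite e eqxx in h1.
by case: eqP => [e|_] //; rewrite e eqxx in h2.
Qed.

Lemma block_up (u : seq nat) j : uniq u ->
  (j \in u -> j.+1 \in u -> (index j u < index j.+1 u)%N) ->
  forall x, (x <= j)%N -> (tn u x <= j.+1)%N /\ (tn u x = j.+1 -> j \in u).
Proof.
elim: u => [|i u IH] /= Hu H x Hx.
  by split; [lia| lia].
case/andP: Hu => iu Hu.
have H' : j \in u -> j.+1 \in u -> (index j u < index j.+1 u)%N.
  move=> a b; have := H; rewrite !in_cons a b !orbT.
  have -> : (i == j) = false by apply/eqP=> e; move: iu; rewrite e a.
  have -> : (i == j.+1) = false by apply/eqP=> e; move: iu; rewrite e b.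
  by move=> /(_ isT isT).
have [h1 h2] := IH Hu H' x Hx.
move: h1 h2; set y := tn u x => h1 h2.
rewrite /sw; case: (eqVneq y i) => [e|ne1].
  case: (eqVneq y j.+1) => [e2|ne2].
    exfalso. have ju := h2 e2.
    have ei : i = j.+1 by rewrite -e e2.
    rewrite ei in H.
    have : (j.+1 == j) = false by lia.
    by move: H; rewrite !in_cons ju !eqxx !orbT => /(_ isT isT).
  split; first lia.
  move=> e3; rewrite in_cons; apply/orP; left; apply/eqP; lia.
case: (eqVneq y i.+1) => [e|ne2].
  split; first lia.
  move=> e3; exfalso; lia.
split => // e3; rewrite in_cons (h2 e3) orbT //.
Qed.

Lemma block_down (u : seq nat) j : uniq u ->
  (j \in u -> j.+1 \in u -> (index j.+1 u < index j u)%N) ->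
  forall x, (j.+2 <= x)%N -> (j.+1 <= tn u x)%N /\ (tn u x = j.+1 -> j.+1 \in u).
Proof.
elim: u => [|i u IH] /= Hu H x Hx.
  by split; [lia| lia].
case/andP: Hu => iu Hu.
have H' : j \in u -> j.+1 \in u -> (index j.+1 u < index j u)%N.
  move=> a b; have := H; rewrite !in_cons a b !orbT.
  have -> : (i == j) = false by apply/eqP=> e; move: iu; rewrite e a.
  have -> : (i == j.+1) = false by apply/eqP=> e; move: iu; rewrite e b.
  by move=> /(_ isT isT).
have [h1 h2] := IH Hu H' x Hx.
move: h1 h2; set y := tn u x => h1 h2.
rewrite /sw; case: (eqVneq y i) => [e|ne1].
  split; first lia.
  move=> e3; exfalso; lia.
case: (eqVneq y i.+1) => [e|ne2].
  case: (eqVneq i j) => [ei|nei].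
    exfalso. have ju : j.+1 \in u by apply: h2; lia.
    rewrite ei in H.
    by move: H; rewrite !in_cons ju !eqxx !orbT => /(_ isT isT).
  split; first lia.
  move=> e3; rewrite in_cons; apply/orP; left; apply/eqP; lia.
split => // e3; rewrite in_cons (h2 e3) orbT //.
Qed.

Section Vec.
Variables (R : realFieldType) (r : nat).

Lemma lo_val (i : 'I_r) : val (lo i) = val i. Proof. by []. Qed.
Lemma hi_val (i : 'I_r) : val (hi i) = (val i).+1. Proof. by []. Qed.

Lemma tval (i : 'I_r) (k : 'I_r.+1) :
  val (tperm (lo i) (hi i) k) = sw i (val k).
Proof.
rewrite /sw; case: tpermP => [->|->|n1 n2].
- by rewrite lo_val hi_val eqxx.
- by rewrite lo_val hi_val eqxx; case: eqP => //; lia.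
- have -> : (val k == val i) = false by apply/eqP=> h; apply: n1; apply/val_inj.
  have -> : (val k == (val i).+1) = false by apply/eqP=> h; apply: n2; apply/val_inj.
  by [].
Qed.

Definition track (w : seq 'I_r) (a : 'I_r.+1) : 'I_r.+1 :=
  foldr (fun i b => tperm (lo i) (hi i) b) a w.

Lemma track_val w a : val (track w a) = tn (map val w) (val a).
Proof. by elim: w => [|i w IH] //=; rewrite tval IH. Qed.

Lemma s_e (i : 'I_r) k : s R r i (e R r k) = e R r (tperm (lo i) (hi i) k).
Proof.
apply/rowP => j; rewrite !mxE; congr (_%:R).
by rewrite -[j == tperm _ _ k](inj_eq (@perm_inj _ (tperm (lo i) (hi i)))) tpermK.
Qed.

Lemma s_sub (i : 'I_r) x y : s R r i (x - y) = s R r i x - s R r i y.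
Proof. by apply/rowP => j; rewrite !mxE. Qed.

Lemma wprod_e w k : wprod R r w (e R r k) = e R r (track w k).
Proof. by elim: w => [|i w IH] //=; rewrite IH s_e. Qed.

Lemma wprod_sub w x y : wprod R r w (x - y) = wprod R r w x - wprod R r w y.
Proof. by elim: w => [|i w IH] //=; rewrite IH s_sub. Qed.

Lemma wprod_theta w : wprod R r w (theta R r) =
  e R r (track w ord0) - e R r (track w ord_max).
Proof. by rewrite /theta wprod_sub !wprod_e. Qed.

Lemma wprod_cat u v x : wprod R r (u ++ v) x = wprod R r u (wprod R r v x).
Proof. by rewrite /wprod foldr_cat; elim: u => //= i u ->. Qed.

Lemma key1 (p q : bool) : (1%N)%:R = p%:R - q%:R :> R -> p.
Proof.
case: p => //; case: q => /= h; exfalso.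
- by move: h; rewrite sub0r => h; lra.
- by move: h; rewrite subr0 => h; lra.
Qed.

Lemma e_diff_eq a b c d : a != b -> e R r a - e R r b = e R r c - e R r d ->
  a = c /\ b = d.
Proof.
move=> nab H.
have Ha := congr1 (fun v : 'rV_(r.+1) => v 0 a) H.
have Hb := congr1 (fun v : 'rV_(r.+1) => v 0 b) H.
move: Ha Hb; rewrite /= !mxE !eqxx (negbTE nab) (eq_sym b a) (negbTE nab) /= subr0 => Ha Hb.
have Hb' : (1%N)%:R = (b == d)%:R - (b == c)%:R :> R.
  by move: Hb; rewrite sub0r => Hb; lra.
have h1 := key1 _ _ Ha. have h2 := key1 _ _ Hb'.
by split; apply/eqP.
Qed.

Lemma sw_id i x : x != i -> x != i.+1 -> sw i x = x.
Proof. by rewrite /sw => /negbTE -> /negbTE ->. Qed.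

Lemma sw_i i : sw i i = i.+1. Proof. by rewrite /sw eqxx. Qed.
Lemma sw_i1 i : sw i i.+1 = i. Proof. by rewrite /sw eqxx; case: eqP => //; lia. Qed.

Lemma sw_comm i j x : i != j.+1 -> j != i.+1 -> sw i (sw j x) = sw j (sw i x).
Proof.
move=> /eqP h1 /eqP h2.
case: (eqVneq i j) => [->//|/eqP ne].
case: (eqVneq x i) => [->|/eqP n1].
  by rewrite (@sw_id j i) ?sw_i ?(@sw_id j i.+1) //; apply/eqP; lia.
case: (eqVneq x i.+1) => [->|/eqP n2].
  by rewrite (@sw_id j i.+1) ?sw_i1 ?(@sw_id j i) //; apply/eqP; lia.
case: (eqVneq x j) => [->|/eqP n3].
  by rewrite (@sw_id i j) ?sw_i ?(@sw_id i j.+1) //; apply/eqP; lia.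
case: (eqVneq x j.+1) => [->|/eqP n4].
  by rewrite (@sw_id i j.+1) ?sw_i1 ?(@sw_id i j) //; apply/eqP; lia.
have e1 : sw i x = x by apply: sw_id; apply/eqP; lia.
have e2 : sw j x = x by apply: sw_id; apply/eqP; lia.
by rewrite e2 e1 e2.
Qed.

Lemma s_comm (a b : 'I_r) x : val a != (val b).+1 -> val b != (val a).+1 ->
  s R r a (s R r b x) = s R r b (s R r a x).
Proof.
move=> h1 h2; apply/rowP => k; rewrite !mxE; congr (x 0 _).
by apply/val_inj; rewrite !tval sw_comm.
Qed.

Lemma s_comm_w (i : 'I_r) v y :
  (forall x, x \in v -> val x != (val i).+1 /\ val i != (val x).+1) ->
  s R r i (wprod R r v y) = wprod R r v (s R r i y).
Proof.
elim: v => [|j v IH] H //=.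
have [h1 h2] := H j (mem_head _ _).
rewrite s_comm // IH //.
by move=> x hx; apply: H; rewrite in_cons hx orbT.
Qed.

Definition orient (u v : seq 'I_r) := forall a b : 'I_r, a \in u -> b \in u ->
  val b = (val a).+1 -> (index a u < index b u)%N = (index a v < index b v)%N.

Lemma idx_rm (v1 v2 : seq 'I_r) i a b : a != i -> b != i ->
  (index a (v1 ++ i :: v2) < index b (v1 ++ i :: v2))%N =
  (index a (v1 ++ v2) < index b (v1 ++ v2))%N.
Proof.
move=> ha hb; rewrite !index_cat /= (eq_sym i a) (eq_sym i b) (negbTE ha) (negbTE hb).
have la := index_mem a v1; have lb := index_mem b v1.
case: (a \in v1) la => la; case: (b \in v1) lb => lb; apply/idP/idP => h; move: (index a v1) (index b v1) (index a v2) (index b v2) (size v1) la lb h => n1 n2 n3 n4 n5 *; lia.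
Qed.

Lemma orient_eq (u : seq 'I_r) : forall v, uniq u -> perm_eq u v -> orient u v ->
  forall y, wprod R r u y = wprod R r v y.
Proof.
elim: u => [|i u IH] v Hu Hp Ho y.
  by move: (perm_size Hp); case: v {Hp Ho} => //.
have iv : i \in v by rewrite -(perm_mem Hp) mem_head.
move: Hp Ho; case/splitPr: iv => v1 v2 Hp Ho.
have Hv : uniq (v1 ++ i :: v2) by rewrite -(perm_uniq Hp).
move: (Hu) => /= /andP[iu Hu'].
have iv1 : i \notin v1.
  by move: Hv; rewrite cat_uniq /= => /and3P[_ /norP[]].
have idxi : index i (v1 ++ i :: v2) = size v1.
  by rewrite index_cat (negbTE iv1) /= eqxx addn0.
have nadj : forall x, x \in v1 -> val x != (val i).+1 /\ val i != (val x).+1.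
  move=> x xv1.
  have xi : x != i by apply/eqP=> e; move: iv1; rewrite -e xv1.
  have xu : x \in i :: u by rewrite (perm_mem Hp) mem_cat xv1.
  have idxx : index x (v1 ++ i :: v2) = index x v1 by rewrite index_cat xv1.
  have lx : (index x v1 < size v1)%N by rewrite index_mem.
  split; apply/eqP => e.
  - have := Ho i x (mem_head _ _) xu e.
    rewrite /= eqxx (eq_sym i x) (negbTE xi) idxi idxx. lia.
  - have := Ho x i xu (mem_head _ _) e.
    rewrite /= eqxx (eq_sym i x) (negbTE xi) idxi idxx. lia.
rewrite wprod_cat /= -s_comm_w // -wprod_cat.
congr (s R r i _); apply: IH => //.
  by rewrite -(perm_cons i) (permPl Hp) -cat1s perm_catCA.
move=> a b au bu e.
have ai : a != i by apply/eqP=> h; move: iu; rewrite -h au.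
have bi : b != i by apply/eqP=> h; move: iu; rewrite -h bu.
have := Ho a b; rewrite !in_cons au bu !orbT => /(_ isT isT e).
by rewrite /= (eq_sym i a) (eq_sym i b) (negbTE ai) (negbTE bi) ltnS idx_rm.
Qed.
End Vec.

Local Open Scope nat_scope.

Lemma rev_iotaS m : rev (iota 0 m.+1) = m :: rev (iota 0 m).
Proof. by rewrite -addn1 iotaD rev_cat. Qed.

Lemma index_iota_val a n x : a <= x < a + n -> index x (iota a n) = x - a.
Proof.
elim: n a => [|n IH] a hx; first lia.
rewrite /=; case: eqP => [->|ne]; first by rewrite subnn.
rewrite IH; lia.
Qed.

Lemma index_rev_iota m x : x < m -> index x (rev (iota 0 m)) = m.-1 - x.
Proof.
elim: m => [|m IH] hx; first lia.
rewrite rev_iotaS /=; case: eqP => [->|ne]; first by rewrite subnn.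
rewrite IH; lia.
Qed.

Lemma filter_iota_ge m r : m <= r -> [seq k <- iota 0 r | m <= k] = iota m (r - m).
Proof.
move=> hm; rewrite -{1}(subnKC hm) iotaD filter_cat add0n.
rewrite (@eq_in_filter _ _ pred0); last by move=> k; rewrite mem_iota /=; lia.
rewrite (@eq_in_filter _ _ predT (iota m _)); last by move=> k; rewrite mem_iota /=; lia.
by rewrite filter_pred0 filter_predT.
Qed.

Lemma filter_iota_lt m r : m <= r -> [seq k <- iota 0 r | k < m] = iota 0 m.
Proof.
move=> hm; rewrite -{1}(subnKC hm) iotaD filter_cat add0n.
rewrite (@eq_in_filter _ _ predT); last by move=> k; rewrite mem_iota /=; lia.
rewrite (@eq_in_filter _ _ pred0 (iota m _)); last by move=> k; rewrite mem_iota /=; lia.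
by rewrite filter_pred0 filter_predT cats0.
Qed.

Definition CW r m := iota m (r - m) ++ rev (iota 0 m).

Lemma Cword_val r (m : 'I_r) : map val (Cword m) = CW r m.
Proof.
rewrite /Cword /CW map_cat map_rev.
have hm : m <= r by exact: ltnW (ltn_ord m).
have -> : map val [seq i : 'I_r <- enum 'I_r | m <= i] = [seq k <- iota 0 r | m <= k].
  by rewrite -val_enum_ord filter_map.
have -> : map val [seq i : 'I_r <- enum 'I_r | i < m] = [seq k <- iota 0 r | k < m].
  by rewrite -val_enum_ord filter_map.
by rewrite filter_iota_ge ?filter_iota_lt.
Qed.

Lemma CW_orient r m j : m < r -> j.+1 < r ->
  (index j (CW r m) < index j.+1 (CW r m)) = (m <= j).
Proof.
move=> hm hj; rewrite /CW !index_cat !mem_iota size_iota.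
case: ifP => h1; case: ifP => h2; rewrite ?index_iota_val ?index_rev_iota;
  try lia; apply/idP/idP => ?; lia.
Qed.

Lemma tn_rev_iota0 m : tn (rev (iota 0 m)) 0 = m.
Proof. by elim: m => [|m IH] //; rewrite rev_iotaS /= -/(tn _ _) IH sw_i. Qed.

Lemma tn_iota_top a n : tn (iota a n) (a + n) = a.
Proof.
elim: n a => [|n IH] a; first by rewrite addn0.
by rewrite /= -/(tn _ _) -addSnnS IH sw_i1.
Qed.

Lemma tn_CW0 r m : m < r -> tn (CW r m) 0 = m.+1.
Proof.
move=> hm; rewrite /CW tn_cat tn_rev_iota0.
have -> : r - m = (r - m.+1).+1 by lia.
rewrite /= -/(tn _ _) tn_fix ?sw_i // => i; rewrite mem_iota => h; apply/andP; split; apply/eqP; lia.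
Qed.

Lemma tn_CWr r m : m < r -> tn (CW r m) r = m.
Proof.
move=> hm; rewrite /CW tn_cat (@tn_fix (rev (iota 0 m)) r).
  by have := tn_iota_top m (r - m); rewrite subnKC //; lia.
move=> i; rewrite mem_rev mem_iota => h; apply/andP; split; apply/eqP; lia.
Qed.

Local Open Scope ring_scope.

Lemma part1 (R : realFieldType) (r : nat) (m : 'I_r) :
  C R r m (theta R r) = - alpha R r m.
Proof.
rewrite /C wprod_theta /alpha opprB.
have hm := ltn_ord m.
congr (e R r _ - e R r _); apply/val_inj; rewrite track_val Cword_val.
  by rewrite tn_CW0.
by rewrite tn_CWr.
Qed.

Theorem lemma4 (R : realFieldType) (r : nat) (hr : (0 < r)%N) :
  (forall m : 'I_r, C R r m (theta R r) = - alpha R r m) /\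
  (forall w : seq 'I_r, perm_eq w (enum 'I_r) ->
     (pos_root R r (wprod R r w (theta R r)) <->
      (forall m : 'I_r, wprod R r w <> C R r m))).
Proof.
split; first exact: part1.
move=> w Hw.
have Uw : uniq w by rewrite (perm_uniq Hw) enum_uniq.
have Mw : forall a : 'I_r, a \in w by move=> a; rewrite (perm_mem Hw) mem_enum.
set u := map val w.
have Uu : uniq u by rewrite map_inj_uniq //; exact: val_inj.
have Mu : forall j, (j < r)%N -> j \in u.
  by move=> j hj; apply/mapP; exists (Ordinal hj) => //.
have Iu : forall a : 'I_r, index (val a) u = index a w.
  by move=> a; rewrite index_map //; exact: val_inj.
split.
  move=> Hpos m Heq.
  move: Hpos; rewrite Heq part1 /alpha opprB => -[i [j [lij E]]].
  have hne : hi m != lo m.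
    by apply/eqP => /(congr1 val); rewrite hi_val lo_val; lia.
  have [E1 E2] := @e_diff_eq R r _ _ _ _ hne E.
  by move: lij; rewrite -E1 -E2 hi_val lo_val; lia.
move=> Hne.
rewrite wprod_theta.
case: (ltnP (val (track _ w ord0)) (val (track _ w ord_max))) => [lt|ge].
  by exists (track _ w ord0), (track _ w ord_max).
exfalso.
move: ge; rewrite !track_val -/u /= => ge.
have mono : forall j j', (j < j')%N -> (j'.+1 < r)%N ->
    (index j u < index j.+1 u)%N -> (index j'.+1 u < index j' u)%N -> False.
  move=> j j' hjj hj' b1 b2.
  have [h1 _] := @block_up u j Uu (fun _ _ => b1) 0 (leq0n j).
  have [h2 _] := @block_down u j' Uu (fun _ _ => b2) r hj'.
  lia.
have dist : forall j, (j.+1 < r)%N ->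
    (index j u < index j.+1 u)%N = false -> (index j.+1 u < index j u)%N.
  move=> j hj hb.
  case: (ltngtP (index j.+1 u) (index j u)) => // [h|h].
    by rewrite h in hb.
  have := nth_index 0 (Mu j.+1 hj); rewrite h nth_index //; last by apply: Mu; lia.
  lia.
set b := fun j => (index j u < index j.+1 u)%N.
set m := find b (iota 0 r.-1).
have hm : (m < r)%N by have := find_size b (iota 0 r.-1); rewrite size_iota; lia.
have orient_u : forall j, (j.+1 < r)%N -> b j = (m <= j)%N.
  move=> j hj.
  case: (ltnP j m) => hjm.
    have := before_find 0 hjm; rewrite nth_iota; [|lia]. by [].
  have hsz : (m < size (iota 0 r.-1))%N by rewrite size_iota; lia.
  have hbm : b m.
    have hhas : has b (iota 0 r.-1) by rewrite has_find.
    by have := nth_find 0 hhas; rewrite -/m nth_iota ?add0n //; move: hsz; rewrite size_iota.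
  case: (eqVneq j m) => [->//|ne].
  case E: (b j) => //.
  exfalso; apply: (mono m j); [lia|lia|exact: hbm|].
  by apply: dist.
apply: (Hne (Ordinal hm)).
apply: functional_extensionality => y.
apply: orient_eq => //.
  apply: (perm_trans Hw); rewrite perm_sym /Cword.
  apply: (perm_trans _ (permEl (perm_filterC (fun i : 'I_r => (m <= i)%N) (enum 'I_r)))).
  rewrite perm_cat2l; apply: (perm_trans (permEl (perm_rev _))).
  rewrite (@eq_filter _ _ (predC (fun i : 'I_r => (m <= i)%N))) //.
  by move=> i /=; rewrite -ltnNge.
move=> a c _ _ ac.
have hac : ((val a).+1 < r)%N by rewrite -ac ltn_ord.
rewrite -!Iu -(index_map val_inj (Cword (Ordinal hm)) a).
rewrite -(index_map val_inj (Cword (Ordinal hm)) c) Cword_val ac /=.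
rewrite CW_orient //.
exact: orient_u hac.
Qed.
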